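(* Assume that for every $y\in\mathcal Y$ the map $u\mapsto\ell(y,u)$ is convex and twice continuously differentiable. Then for every $y,z\in\mathcal Y$ and every $\lambda>0$, $$\big\|\hat f_{\lambda;D^y}-\hat f_{\lambda;D^z}\big\|_{\mathcal H}\le\sqrt{K_{n+1,n+1}}\,\frac{\rho^{(1)}_\lambda(y)}{\lambda(n+1)},$$ where $\rho^{(1)}_\lambda(y)=\frac12\big|-\partial_2\ell(z,\hat f_{\lambda;D^z}(X_{n+1}))+\partial_2\ell(y,\hat f_{\lambda;D^z}(X_{n+1}))\big|$.
   Context: Let $\mathcal X\subset\mathbb R^d$, $\mathcal Y\subset\mathbb R$, $D=\{(X_1,Y_1),\dots,(X_n,Y_n)\}$ i.i.d. with distribution $P$ on $\mathcal X\times\mathcal Y$, $(X_{n+1},Y_{n+1})\sim P$ independent. For $y\in\mathcal Y$, $D^y=D\cup\{(X_{n+1},y)\}$. $\mathcal H$ is an RKHS of functions $\mathcal X\to\mathbb R$ with kernel $\kappa_{\mathcal H}$, and $K_{n+1,n+1}=\kappa_{\mathcal H}(X_{n+1},X_{n+1})$. For a loss $\ell:\mathcal Y\times\mathcal Y\to\mathbb R$ and $\lambda>0$, $\hat f_{\lambda;D^y}$ is the minimizer over $f\in\mathcal H$ of $\frac1{n+1}\sum_{(x,y')\in D^y}\ell(y',f(x))+\lambda\|f\|_{\mathcal H}^2$. $\partial_2\ell(y,u)$ denotes the derivative of $u\mapsto\ell(y,u)$. *)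

(* Defs.v *)
From HB Require Import structures.
From mathcomp Require Import all_boot all_order all_algebra.
From mathcomp Require Import all_classical all_reals all_analysis.
Set Implicit Arguments. Unset Strict Implicit. Unset Printing Implicit Defensive.
Import Order.TTheory GRing.Theory Num.Theory.
Import numFieldNormedType.Exports.
Local Open Scope ring_scope.
Local Open Scope classical_set_scope.

(* A real Hilbert space V (an R-vector space with an inner product, complete
   for the induced norm) of functions X -> R, where [ev f] is the function
   represented by f, with a reproducing kernel: [kx x] is the representer of
   evaluation at x, i.e. f(x) = <f, kx x>. *)
Definition hnorm (R : realType) (V : lmodType R) (inner : V -> V -> R) (f : V) : R :=
  Num.sqrt (inner f f).

Definition is_RKHS (R : realType) (X : Type) (V : lmodType R)
    (inner : V -> V -> R) (ev : V -> X -> R) (kx : X -> V) : Prop :=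
      (forall f g, inner f g = inner g f) /\
      (forall a f g h, inner (a *: f + g) h = a * inner f h + inner g h) /\
      (forall f, 0 <= inner f f) /\
      (forall f, inner f f = 0 -> f = 0) /\
      (forall u : nat -> V,
         (forall e : R, 0 < e -> exists N, forall m p, (N <= m)%N -> (N <= p)%N ->
                hnorm inner (u m - u p) < e) ->
         exists l : V, forall e : R, 0 < e -> exists N, forall m, (N <= m)%N ->
                hnorm inner (u m - l) < e) /\
      (forall a f g x, ev (a *: f + g) x = a * ev f x + ev g x) /\
      (forall f g, ev f = ev g -> f = g) /\
      (forall f x, ev f x = inner f (kx x)).

Definition rkernel (R : realType) (X : Type) (V : lmodType R)
    (inner : V -> V -> R) (kx : X -> V) (x x' : X) : R :=
  inner (kx x) (kx x').

Definition d2 (R : realType) (l : R -> R -> R) (y u : R) : R :=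
  derive1 (l y) u.

Definition convex_in2 (R : realType) (l : R -> R -> R) (y : R) : Prop :=
  forall u v t : R, 0 <= t -> t <= 1 ->
    l y (t * u + (1 - t) * v) <= t * l y u + (1 - t) * l y v.

Definition C2_in2 (R : realType) (l : R -> R -> R) (y : R) : Prop :=
  [/\ (forall u : R, derivable (l y) u 1),
      (forall u : R, derivable (derive1 (l y)) u 1) &
      continuous (derive1 (derive1 (l y)))].

(* Regularized empirical risk on D^y = D ∪ {(xnew, y)} (n+1 points):
   1/(n+1) * sum_{(x,y') in D^y} l(y', f(x)) + lam * ||f||^2 *)
Definition reg_risk (R : realType) (X : Type) (V : lmodType R)
    (inner : V -> V -> R) (ev : V -> X -> R) (l : R -> R -> R)
    (n : nat) (Xd : 'I_n -> X) (Yd : 'I_n -> R) (xnew : X) (y lam : R) (f : V) : R :=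
  (n.+1%:R)^-1 * (\sum_(i < n) l (Yd i) (ev f (Xd i)) + l y (ev f xnew))
  + lam * inner f f.

Definition is_minimizer (R : realType) (V : Type) (J : V -> R) (f : V) : Prop :=
  forall g : V, J f <= J g.

(* Main.v *)
Require Import Defs.
From HB Require Import structures.
From mathcomp Require Import all_boot all_order all_algebra.
From mathcomp Require Import all_classical all_reals all_analysis.
From mathcomp Require Import ring lra.
Import Order.TTheory GRing.Theory Num.Theory.
Import numFieldNormedType.Exports.
Local Open Scope ring_scope.
Local Open Scope classical_set_scope.

Lemma key (R : realType) (f : R -> R) (x v A B : R) :
  derivable f x 1 ->
  (forall h, 0 < h -> h < 1 -> A - B * h <= h^-1 * (f (h * v + x) - f x)) ->
  A <= v * derive1 f x.
Proof.
move=> d1 H.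
have dfx : differentiable f x by apply/derivable1_diffP.
have dv : derivable f x v by apply: diff_derivable.
have -> : v * derive1 f x = 'D_v f x by rewrite deriveE // diff1E.
have dfc : (fun h : R => h^-1 *: ((f \o shift x) (h *: v) - f x)) @ 0^' --> 'D_v f x.
  exact: dv.
have dfr : (fun h : R => h^-1 *: ((f \o shift x) (h *: v) - f x)) @ 0^'+ --> 'D_v f x.
  apply: cvg_trans dfc; apply: cvg_app.
  move=> S [e egt0 Se]; exists e => // y ye ygt0; apply: Se => //.
  exact/lt0r_neq0.
have gc : (fun h : R => A - B * h) @ 0^'+ --> A.
  apply: cvg_at_right_filter.
  suff : (fun h : R => A - B * h) @ 0 --> A - B * 0 by rewrite mulr0 subr0.
  apply: cvgB; first exact: cvg_cst.
  by apply: cvgM; [exact: cvg_cst| exact: cvg_id].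
apply: (ler_cvg_to gc dfr).
near=> h.
have h0 : 0 < h by near: h; exact: nbhs_right_gt.
have h1 : h < 1 by near: h; exact: nbhs_right_lt.
have := H h h0 h1. by rewrite /= /shift.
Unshelve. all: by end_near.
Qed.

Lemma key_le (R : realType) (f : R -> R) (x v A B : R) :
  derivable f x 1 ->
  (forall h, 0 < h -> h < 1 -> h^-1 * (f (h * v + x) - f x) <= A + B * h) ->
  v * derive1 f x <= A.
Proof.
move=> d1 H.
have dfx : differentiable f x by apply/derivable1_diffP.
have dv : derivable f x v by apply: diff_derivable.
have -> : v * derive1 f x = 'D_v f x by rewrite deriveE // diff1E.
have dfc : (fun h : R => h^-1 *: ((f \o shift x) (h *: v) - f x)) @ 0^' --> 'D_v f x.
  exact: dv.
have dfr : (fun h : R => h^-1 *: ((f \o shift x) (h *: v) - f x)) @ 0^'+ --> 'D_v f x.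
  apply: cvg_trans dfc; apply: cvg_app.
  move=> S [e egt0 Se]; exists e => // y ye ygt0; apply: Se => //.
  exact/lt0r_neq0.
have gc : (fun h : R => A + B * h) @ 0^'+ --> A.
  apply: cvg_at_right_filter.
  suff : (fun h : R => A + B * h) @ 0 --> A + B * 0 by rewrite mulr0 addr0.
  apply: cvgD; first exact: cvg_cst.
  by apply: cvgM; [exact: cvg_cst| exact: cvg_id].
apply: (ler_cvg_to dfr gc).
near=> h.
have h0 : 0 < h by near: h; exact: nbhs_right_gt.
have h1 : h < 1 by near: h; exact: nbhs_right_lt.
have := H h h0 h1. by rewrite /= /shift.
Unshelve. all: by end_near.
Qed.

Lemma support (R : realType) (g : R -> R) (w u : R) :
  (forall a b t : R, 0 <= t -> t <= 1 -> g (t * a + (1 - t) * b) <= t * g a + (1 - t) * g b) ->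
  derivable g w 1 -> (u - w) * derive1 g w <= g u - g w.
Proof.
move=> cv dg.
apply: (@key_le R g w (u - w) (g u - g w) 0 dg) => h h0 h1.
rewrite mul0r addr0.
have := cv u w h (ltW h0) (ltW h1).
have -> : h * (u - w) + w = h * u + (1 - h) * w by ring.
move=> H.
rewrite ler_pdivrMl //.
lra.
Qed.

Lemma monot (R : realType) (g : R -> R) (p q : R) :
  (forall a b t : R, 0 <= t -> t <= 1 -> g (t * a + (1 - t) * b) <= t * g a + (1 - t) * g b) ->
  derivable g p 1 -> derivable g q 1 ->
  0 <= (derive1 g p - derive1 g q) * (p - q).
Proof.
move=> cv dp dq.
have := @support R g p q cv dp. have := @support R g q p cv dq. nra.
Qed.

Section Inner.
Variables (R : realType) (V : lmodType R) (inner : V -> V -> R).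
Hypothesis Hsym : forall f g, inner f g = inner g f.
Hypothesis Hlin : forall a f g h, inner (a *: f + g) h = a * inner f h + inner g h.
Hypothesis Hpos : forall f, 0 <= inner f f.
Hypothesis Hdef : forall f, inner f f = 0 -> f = 0.

Lemma inner0 h : inner 0 h = 0.
Proof.
have := Hlin 1 0 0 h. rewrite scaler0 addr0 mul1r. lra.
Qed.

Lemma inner_comb a b f g h :
  inner (a *: f + b *: g) h = a * inner f h + b * inner g h.
Proof.
rewrite Hlin; congr (_ + _).
have := Hlin b g 0 h. by rewrite addr0 inner0 addr0.
Qed.

Lemma inner_comb2 a b f g :
  inner (a *: f + b *: g) (a *: f + b *: g) =
  a ^+ 2 * inner f f + 2 * a * b * inner f g + b ^+ 2 * inner g g.
Proof.
rewrite inner_comb Hsym inner_comb [inner g (a *: f + b *: g)]Hsym inner_comb.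
rewrite [inner g f]Hsym. ring.
Qed.

Lemma CS f g : inner f g ^+ 2 <= inner f f * inner g g.
Proof.
have [g0|gpos] := eqVneq (inner g g) 0.
  have -> : g = 0 by apply: Hdef.
  by rewrite Hsym inner0 expr0n /= mulr_ge0.
have gp : 0 < inner g g by rewrite lt0r gpos Hpos.
set t := - (inner f g / inner g g).
have := Hpos (1 *: f + t *: g).
rewrite inner_comb2 /t.
set A := inner f f; set B := inner f g; set C := inner g g.
move=> H.
have : 0 <= A - B ^+ 2 / C.
  suff -> : A - B ^+ 2 / C = 1 ^+ 2 * A + 2 * 1 * - (B / C) * B + (- (B / C)) ^+ 2 * C by [].
  by field.
rewrite subr_ge0 ler_pdivrMr //.
Qed.

Lemma CS_abs f g : `|inner f g| <= Num.sqrt (inner f f) * Num.sqrt (inner g g).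
Proof.
rewrite -sqrtrM ?Hpos // -sqrtr_sqr.
apply: ler_wsqrtr. exact: CS.
Qed.

End Inner.

Theorem proposition12 (R : realType) (X : Type) (Ysp : set R)
    (V : lmodType R) (inner : V -> V -> R) (ev : V -> X -> R) (kx : X -> V)
    (l : R -> R -> R) (n : nat) (Xd : 'I_n -> X) (Yd : 'I_n -> R) (xnew : X) :
  is_RKHS inner ev kx ->
  (forall i, Ysp (Yd i)) ->
  (forall y, Ysp y -> convex_in2 l y /\ C2_in2 l y) ->
  forall (y z lam : R) (fy fz : V),
    Ysp y -> Ysp z -> 0 < lam ->
    is_minimizer (reg_risk inner ev l Xd Yd xnew y lam) fy ->
    is_minimizer (reg_risk inner ev l Xd Yd xnew z lam) fz ->
    hnorm inner (fy - fz)
      <= Num.sqrt (rkernel inner kx xnew xnew)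
         * ((2%:R)^-1 * `| - d2 l z (ev fz xnew) + d2 l y (ev fz xnew)|)
         / (lam * n.+1%:R).
Proof.
move=> [Hsym [Hlin [Hpos [Hdef [_ [_ [_ Hrep]]]]]]] HY Hl y z lam fy fz Yy Yz lam0 Miny Minz.
have evc : forall a b f g p, ev (a *: f + b *: g) p = a * ev f p + b * ev g p.
  by move=> a b f g p; rewrite !Hrep inner_comb.
have [cvy [dy _ _]] := Hl y Yy.
have [cvz [dz _ _]] := Hl z Yz.
have cvi : forall i, convex_in2 l (Yd i) by move=> i; have [] := Hl _ (HY i).
set ay := ev fy xnew; set bz := ev fz xnew; set D := ay - bz.
set a11 := inner fy fy; set a22 := inner fz fz; set a12 := inner fy fz.
set N2 := a11 - 2 * a12 + a22.
set c : R := n.+1%:R.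
have c0 : 0 < c by rewrite /c ltr0n.
set ci := c^-1.
have ci0 : 0 < ci by rewrite invr_gt0.
set ly' := derive1 (l y). set lz' := derive1 (l z).
have hd : fy - fz = 1 *: fy + (-1) *: fz by rewrite scale1r scaleN1r.
have N2E : inner (fy - fz) (fy - fz) = N2.
  by rewrite hd inner_comb2 // /N2 /a11 /a12 /a22; ring.
have DE : D = inner (fy - fz) (kx xnew).
  by rewrite hd inner_comb // -!Hrep /D /ay /bz; ring.
have step1 : forall t, 0 < t -> t < 1 ->
    2 * lam * t * (1 - t) * N2 <=
    ci * ((l z (t * D + bz) - l z bz) + (l y (ay - t * D) - l y ay)).
  move=> t t0 t1.
  have hz := Minz (t *: fy + (1 - t) *: fz).
  have hy := Miny ((1 - t) *: fy + t *: fz).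
  move: hz hy; rewrite /reg_risk !evc !inner_comb2 //.
  have -> : \sum_(i < n) l (Yd i) (ev (t *: fy + (1 - t) *: fz) (Xd i)) =
     \sum_(i < n) l (Yd i) (t * ev fy (Xd i) + (1 - t) * ev fz (Xd i)).
    by apply: eq_bigr => i _; rewrite evc.
  have -> : \sum_(i < n) l (Yd i) (ev ((1 - t) *: fy + t *: fz) (Xd i)) =
     \sum_(i < n) l (Yd i) ((1 - t) * ev fy (Xd i) + t * ev fz (Xd i)).
    by apply: eq_bigr => i _; rewrite evc.
  set Sy := \sum_(i < n) l (Yd i) (ev fy (Xd i)).
  set Sz := \sum_(i < n) l (Yd i) (ev fz (Xd i)).
  set S1 := \sum_(i < n) l (Yd i) (t * ev fy (Xd i) + (1 - t) * ev fz (Xd i)).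
  set S2 := \sum_(i < n) l (Yd i) ((1 - t) * ev fy (Xd i) + t * ev fz (Xd i)).
  have hS : S1 + S2 <= Sy + Sz.
    rewrite /S1 /S2 /Sy /Sz -!big_split /=; apply: ler_sum => i _.
    have := cvi i (ev fy (Xd i)) (ev fz (Xd i)) t (ltW t0) (ltW t1).
    have := cvi i (ev fy (Xd i)) (ev fz (Xd i)) (1 - t) _ _.
    rewrite subKr. move=> /(_ _ _) H1 H2.
    have := H1 ltac:(lra) ltac:(lra). lra.
  have e1 : t * ay + (1 - t) * bz = t * D + bz by rewrite /D; ring.
  have e2 : (1 - t) * ay + t * bz = ay - t * D by rewrite /D; ring.
  rewrite -/ay -/bz e1 e2.
  rewrite -/c -/ci -/a11 -/a12 -/a22 /N2.
  move=> hz hy.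
  have hS' : ci * S1 + ci * S2 <= ci * Sy + ci * Sz.
    by rewrite -!mulrDr ler_wpM2l // ltW.
  move: (l z (t * D + bz)) (l z bz) (l y (ay - t * D)) (l y ay) hz hy => A1 A2 A3 A4 hz hy.
  have E : lam * (t ^+ 2 * a11 + 2 * t * (1 - t) * a12 + (1 - t) ^+ 2 * a22) +
    lam * ((1 - t) ^+ 2 * a11 + 2 * (1 - t) * t * a12 + t ^+ 2 * a22) =
    lam * a11 + lam * a22 - 2 * lam * t * (1 - t) * (a11 - 2 * a12 + a22) by ring.
  rewrite (_ : ci * (A1 - A2 + (A3 - A4)) = ci * (S1 + A1) + ci * (S2 + A3) - ci * (Sz + A2)
     - ci * (Sy + A4) + (ci * Sy + ci * Sz - ci * S1 - ci * S2)); last by ring.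
  move: hz hy hS' E.
  move: (ci * (S1 + A1)) (ci * (S2 + A3)) (ci * (Sz + A2)) (ci * (Sy + A4)) => K1 K2 K3 K4.
  move: (ci * S1) (ci * S2) (ci * Sy) (ci * Sz) => B1 B2 B3 B4.
  move: (2 * lam * t * (1 - t) * (a11 - 2 * a12 + a22)) => W.
  move: (lam * (t ^+ 2 * a11 + 2 * t * (1 - t) * a12 + (1 - t) ^+ 2 * a22)) => P1.
  move: (lam * ((1 - t) ^+ 2 * a11 + 2 * (1 - t) * t * a12 + t ^+ 2 * a22)) => P2.
  move: (lam * a11) (lam * a22) => Q1 Q2.
  move=> *. lra.
have step2 : forall t, 0 < t -> t < 1 ->
    l y (ay - t * D) - l y ay <= - (t * D * ly' bz).
  move=> t t0 t1.
  have h1 := @support R (l y) (ay - t * D) ay cvy (dy _).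
  have h2 := @monot R (l y) (ay - t * D) bz cvy (dy _) (dy _).
  rewrite (_ : ay - (ay - t * D) = t * D) in h1; last by ring.
  rewrite (_ : ay - t * D - bz = (1 - t) * D) in h2; last by rewrite /D; ring.
  move: h1 h2; rewrite -/ly'.
  move: (ly' (ay - t * D)) (ly' bz) (l y (ay - t * D)) (l y ay) => L1 L2 M1 M2 h1 h2.
  have h3 : 0 <= (L1 - L2) * D.
    rewrite mulrCA in h2.
    by rewrite -(pmulr_rge0 _ (_ : 0 < 1 - t)) // subr_gt0.
  have h4 : 0 <= t * ((L1 - L2) * D) by rewrite mulr_ge0 // ltW.
  rewrite (_ : t * ((L1 - L2) * D) = t * D * L1 - t * D * L2) in h4; last by ring.
  move: h1 h4.
  move: (t * D * L1) (t * D * L2) => U1 U2 h1 h4.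
  lra.
have step3 : 2 * lam * c * N2 + D * ly' bz <= D * lz' bz.
  apply: (@key R (l z) bz D (2 * lam * c * N2 + D * ly' bz) (2 * lam * c * N2) (dz bz)).
  move=> h h0 h1.
  have H1 := step1 h h0 h1.
  have H2 := step2 h h0 h1.
  move: H1 H2.
  set q := h^-1 * (l z (h * D + bz) - l z bz).
  have -> : l z (h * D + bz) - l z bz = h * q by rewrite /q mulrA mulfV ?mul1r // gt_eqF.
  move=> H1 H2.
  have H3 : 2 * lam * h * (1 - h) * N2 <= ci * (h * q - h * D * ly' bz).
    apply: (le_trans H1); apply: ler_wpM2l; [exact: ltW | lra].
  have H4 := ler_wpM2l (ltW c0) H3.
  rewrite [c * (ci * _)]mulrA /ci mulrV ?mul1r in H4; last by rewrite unitfE gt_eqF.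
  rewrite -(ler_pM2l h0).
  rewrite (_ : h * (2 * lam * c * N2 + D * ly' bz - 2 * lam * c * N2 * h) =
     c * (2 * lam * h * (1 - h) * N2) + h * D * ly' bz); last by ring.
  lra.
set e := - d2 l z bz + d2 l y bz.
have eE : e = ly' bz - lz' bz by rewrite /e /d2 /ly' /lz'; ring.
set K := rkernel inner kx xnew xnew.
have N2ge0 : 0 <= N2 by rewrite -N2E Hpos.
have hN : hnorm inner (fy - fz) = Num.sqrt N2 by rewrite /hnorm N2E.
rewrite hN.
set N := Num.sqrt N2.
have N2N : N2 = N ^+ 2 by rewrite /N sqr_sqrtr.
have Nge0 : 0 <= N by rewrite /N sqrtr_ge0.
have sK0 : 0 <= Num.sqrt K by rewrite sqrtr_ge0.
have HD : `|D| <= N * Num.sqrt K.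
  by rewrite DE /N -N2E; apply: CS_abs.
have HDe : D * (lz' bz - ly' bz) <= `|D| * `|e|.
  rewrite -normrM; apply: (le_trans (ler_norm _)).
  by rewrite eE -[ly' bz - lz' bz]opprB mulrN normrN.
have H5 : 2 * lam * c * N ^+ 2 <= N * Num.sqrt K * `|e|.
  rewrite -N2N.
  apply: (le_trans (_ : _ <= D * (lz' bz - ly' bz))); first lra.
  apply: (le_trans HDe). apply: ler_wpM2r => //.
have lc0 : 0 < lam * c by rewrite mulr_gt0.
rewrite ler_pdivlMr //.
have e0 : 0 <= `|e| by [].
move: H5 e0; move: `|e| => E H5 e0.
have [N0|Npos] := eqVneq N 0.
  by rewrite N0 mul0r mulr_ge0 // mulr_ge0 // invr_ge0 ler0n.
have Np : 0 < N by rewrite lt0r Npos Nge0.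
move: (Num.sqrt K) sK0 H5 => S sK0 H5.
nra.
Qed.
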